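(* Let $f:\{0,1\}^m\to\mathbb{R}$ (viewed as a set function on $2^{[m]}$) be non-negative, monotone non-decreasing and submodular, with marginals $f(S\cup\{i\})-f(S)\in[0,1]$ for all $S\subseteq[m]$, $i\notin S$. Let $t\in\mathbb{R}$ and $\theta<0$, and define $g_{t,\theta}(x)=e^{-\theta t}\,\mathbb{E}_{X\sim\mathcal{D}(x)}\big[e^{\theta f(X)}\big]$ for $x\in[0,1]^m$. Then for every $x\in[0,1]^m$ and all distinct $a,b\in[m]$, the function $z\mapsto g_{t,\theta}(x+z(e_a-e_b))$ is concave on the interval $\{z: x+z(e_a-e_b)\in[0,1]^m\}$.
   Context: For $x\in[0,1]^m$, $\mathcal{D}(x)$ denotes the product distribution on $\{0,1\}^m$ with $\Pr[X_i=1]=x_i$ independently; a vector in $\{0,1\}^m$ is identified with the subset of $[m]$ it indicates. $e_i$ is the $i$-th standard basis vector. *)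

(* Defs.v *)
From mathcomp Require Import all_boot.
From Stdlib Require Import Reals.
Set Implicit Arguments. Unset Strict Implicit. Unset Printing Implicit Defensive.

Open Scope R_scope.

Definition prodprob (m : nat) (x : 'I_m -> R) (S : {set 'I_m}) : R :=
  \big[Rmult/1]_(i : 'I_m) (if i \in S then x i else 1 - x i).

Definition expect (m : nat) (x : 'I_m -> R) (F : {set 'I_m} -> R) : R :=
  \big[Rplus/0]_(S : {set 'I_m}) (prodprob x S * F S).

Definition g_fun (m : nat) (f : {set 'I_m} -> R) (t theta : R) (x : 'I_m -> R) : R :=
  exp (- theta * t) * expect x (fun S => exp (theta * f S)).

Definition e_vec (m : nat) (i : 'I_m) : 'I_m -> R :=
  fun j => if j == i then 1 else 0.

Definition shift_pt (m : nat) (x : 'I_m -> R) (a b : 'I_m) (z : R) : 'I_m -> R :=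
  fun j => x j + z * (e_vec a j - e_vec b j).

Definition in_cube (m : nat) (x : 'I_m -> R) : Prop :=
  forall i, 0 <= x i <= 1.

Definition nonneg_fun (m : nat) (f : {set 'I_m} -> R) : Prop :=
  forall S, 0 <= f S.

Definition monotone_fun (m : nat) (f : {set 'I_m} -> R) : Prop :=
  forall S T : {set 'I_m}, S \subset T -> f S <= f T.

Definition submodular_fun (m : nat) (f : {set 'I_m} -> R) : Prop :=
  forall S T : {set 'I_m}, f (S :|: T) + f (S :&: T) <= f S + f T.

Definition marginals_in_01 (m : nat) (f : {set 'I_m} -> R) : Prop :=
  forall (S : {set 'I_m}) (i : 'I_m), i \notin S ->
    0 <= f (i |: S) - f S <= 1.

Definition concave_on (I : R -> Prop) (h : R -> R) : Prop :=
  forall z1 z2 l, I z1 -> I z2 -> 0 <= l <= 1 ->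
    l * h z1 + (1 - l) * h z2 <= h (l * z1 + (1 - l) * z2).

(* Main.v *)
Require Import Defs.
From HB Require Import structures.
From mathcomp Require Import all_boot.
From Stdlib Require Import Reals Lra.
Open Scope R_scope.

Lemma RplusA : associative Rplus. Proof. by move=> *; rewrite Rplus_assoc. Qed.
Lemma RmultA : associative Rmult. Proof. by move=> *; rewrite Rmult_assoc. Qed.
HB.instance Definition _ := Monoid.isComLaw.Build R 0 Rplus RplusA Rplus_comm Rplus_0_l.
HB.instance Definition _ := Monoid.isComLaw.Build R 1 Rmult RmultA Rmult_comm Rmult_1_l.

Lemma exp_le' (u v : R) : u <= v -> exp u <= exp v.
Proof.
move=> H; case: (Rle_lt_or_eq_dec u v H) => [/exp_increasing|->]; lra.
Qed.

Lemma exp_key (th F0 Fa Fb Fab : R) : th < 0 -> F0 <= Fa -> F0 <= Fb ->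
  Fab + F0 <= Fa + Fb ->
  exp (th * Fa) + exp (th * Fb) <= exp (th * Fab) + exp (th * F0).
Proof.
move=> hth h1 h2 h3.
have ea : exp (th * Fa) <= exp (th * F0) by apply: exp_le'; nra.
have eb : exp (th * Fb) <= exp (th * F0) by apply: exp_le'; nra.
have eab : exp (th * Fa) * exp (th * Fb) <= exp (th * Fab) * exp (th * F0).
  rewrite -!exp_plus; apply: exp_le'; nra.
have p0 := exp_pos (th * F0).
have pa := exp_pos (th * Fa).
have pb := exp_pos (th * Fb).
nra.
Qed.

Lemma quad_key (P l z1 z2 xa xb h0 ha hb hab : R) :
  0 <= P -> 0 <= l <= 1 -> ha + hb <= hab + h0 ->
  let Q z := (1 - (xa + z)) * ((1 - (xb - z)) * P) * h0 +
             (xa + z) * ((1 - (xb - z)) * P) * ha +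
             (1 - (xa + z)) * ((xb - z) * P) * hb +
             (xa + z) * ((xb - z) * P) * hab in
  l * Q z1 + (1 - l) * Q z2 <= Q (l * z1 + (1 - l) * z2).
Proof.
move=> hP hl hs Q.
have E : Q (l * z1 + (1 - l) * z2) - (l * Q z1 + (1 - l) * Q z2) =
   P * (h0 + hab - ha - hb) * (l * (1 - l)) * ((z1 - z2) * (z1 - z2)).
  rewrite /Q; ring.
have h1 : 0 <= P * (h0 + hab - ha - hb) by apply: Rmult_le_pos; lra.
have h2 : 0 <= l * (1 - l) by nra.
have h3 : 0 <= (z1 - z2) * (z1 - z2) by apply: Rle_0_sqr.
clearbody Q.
have : 0 <= P * (h0 + hab - ha - hb) * (l * (1 - l)) * ((z1 - z2) * (z1 - z2)).
  by apply: Rmult_le_pos; [apply: Rmult_le_pos|].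
lra.
Qed.

Set Implicit Arguments.
Section Main.
Variable m : nat.

Lemma sum_add1 (a : 'I_m) (G : {set 'I_m} -> R) :
  \big[Rplus/0]_(S : {set 'I_m}) G S =
  \big[Rplus/0]_(S : {set 'I_m}) (if a \notin S then G S + G (a |: S) else 0).
Proof.
rewrite (bigID (fun S : {set _} => a \in S)) /=.
rewrite (reindex_onto (fun S => a |: S) (fun S => S :\ a)) /=; last first.
  by move=> S aS; rewrite setD1K.
rewrite [RHS](bigID (fun S : {set _} => a \in S)) /=.
rewrite [X in _ = X + _]big1; last by move=> S ->.
rewrite Rplus_0_l Rplus_comm.
rewrite [X in _ + X = _](eq_bigl (fun S : {set _} => a \notin S)); last first.
  move=> S; rewrite setU11 /=; apply/eqP/idP => [<-|aS]; last by rewrite setU1K.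
  by rewrite !inE eqxx.
rewrite -big_split /=; apply: eq_bigr => S aS; by rewrite aS.
Qed.

Lemma sum_comb (l : R) (F1 F2 F3 : {set 'I_m} -> R) :
  (forall S, l * F1 S + (1 - l) * F2 S <= F3 S) ->
  l * \big[Rplus/0]_(S : {set 'I_m}) F1 S + (1 - l) * \big[Rplus/0]_(S : {set 'I_m}) F2 S
  <= \big[Rplus/0]_(S : {set 'I_m}) F3 S.
Proof.
move=> H.
elim/big_rec3: _ => [|S y1 y2 y3 _ IH]; first lra.
have := H S; lra.
Qed.

Variables (x : 'I_m -> R) (a b : 'I_m).
Hypothesis hab : a != b.
Hypothesis hx : in_cube x.

Definition Prest (S : {set 'I_m}) : R :=
  \big[Rmult/1]_(i | (i != a) && (i != b)) (if i \in S then x i else 1 - x i).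

Lemma Prest_ge0 S : 0 <= Prest S.
Proof.
rewrite /Prest; elim/big_rec: _ => [|i y _ IH]; first lra.
apply: Rmult_le_pos => //; case: (hx i) => h1 h2; case: (i \in S); lra.
Qed.

Lemma Prest_add (c : 'I_m) S : (c == a) || (c == b) -> Prest (c |: S) = Prest S.
Proof.
move=> hc; rewrite /Prest; apply: eq_bigr => i /andP [ia ib].
rewrite in_setU1; suff -> : (i == c) = false by [].
apply/negbTE; apply/eqP => ic; move: hc; rewrite -ic (negbTE ia) (negbTE ib).
by [].
Qed.

Lemma prodprob_shift z S :
  prodprob (shift_pt x a b z) S =
  (if a \in S then x a + z else 1 - (x a + z)) *
  ((if b \in S then x b - z else 1 - (x b - z)) * Prest S).
Proof.
have hba : b != a by rewrite eq_sym.
rewrite /prodprob (bigD1 a) //= (bigD1 b) /=; last by rewrite hba.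
have ea : shift_pt x a b z a = x a + z.
  by rewrite /shift_pt /e_vec eqxx (negbTE hab); ring.
have eb : shift_pt x a b z b = x b - z.
  by rewrite /shift_pt /e_vec eqxx (negbTE hba); ring.
rewrite ea eb; congr (_ * (_ * _)).
rewrite /Prest; apply: eq_big => [i|i /andP [ia ib]]; first by rewrite andbC.
have -> : shift_pt x a b z i = x i.
  by rewrite /shift_pt /e_vec (negbTE ia) (negbTE ib); ring.
by [].
Qed.

End Main.
Unset Implicit Arguments.

Theorem claim3p4 (m : nat) (f : {set 'I_m} -> R)
  (hnn : nonneg_fun f) (hmono : monotone_fun f) (hsub : submodular_fun f)
  (hmarg : marginals_in_01 f)
  (t theta : R) (htheta : theta < 0)
  (x : 'I_m -> R) (hx : in_cube x) (a b : 'I_m) (hab : a != b) :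
  concave_on (fun z => in_cube (shift_pt x a b z))
             (fun z => g_fun f t theta (shift_pt x a b z)).
Proof.
move=> z1 z2 l _ _ hl.
rewrite /g_fun /expect.
set G := fun z S => prodprob (shift_pt x a b z) S * exp (theta * f S).
set T := fun z (S : {set 'I_m}) => if b \notin S then (if a \notin S then
   G z S + G z (a |: S) + G z (b |: S) + G z (a |: (b |: S)) else 0) else 0.
have ST : forall z, \big[Rplus/0]_(S : {set 'I_m}) G z S = \big[Rplus/0]_(S : {set 'I_m}) T z S.
  move=> z; rewrite (sum_add1 a) (sum_add1 b); apply: eq_bigr => S _.
  rewrite /T; case: (boolP (b \in S)) => //= bS.
  rewrite in_setU1 (negbTE hab) /=; case: (a \in S) => //=; lra.
have K := exp_pos (- theta * t).
suff : l * \big[Rplus/0]_(S : {set 'I_m}) G z1 S + (1 - l) * \big[Rplus/0]_(S : {set 'I_m}) G z2 S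
  <= \big[Rplus/0]_(S : {set 'I_m}) G (l * z1 + (1 - l) * z2) S.
  rewrite /G => H; nra.
rewrite !ST; apply: sum_comb => S; rewrite /T.
case: (boolP (b \in S)) => /= bS; first lra.
case: (boolP (a \in S)) => /= aS; first lra.
have hba : b != a by rewrite eq_sym.
rewrite /G !prodprob_shift //.
rewrite !Prest_add ?eqxx ?orbT //.
rewrite !in_setU1 !eqxx ?(negbTE aS) ?(negbTE bS) ?(negbTE hab) ?(negbTE hba) /=.
set P := Prest x a b S.
have hP : 0 <= P by apply: Prest_ge0.
have hs : exp (theta * f (a |: S)) + exp (theta * f (b |: S)) <=
          exp (theta * f (a |: (b |: S))) + exp (theta * f S).
  apply: exp_key => //.
  - by apply: hmono; apply: subsetUr.
  - by apply: hmono; apply: subsetUr.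
  - have := hsub (a |: S) (b |: S).
    have -> : (a |: S) :|: (b |: S) = a |: (b |: S).
      by apply/setP => i; rewrite !inE; case: (i == a); case: (i == b); case: (i \in S).
    have -> : (a |: S) :&: (b |: S) = S.
      apply/setP => i; rewrite !inE.
      case: (eqVneq i a) => [->|ia]; first by rewrite ?(negbTE aS) ?(negbTE hab) ?eqxx /=; case: (a \in S).
      case: (eqVneq i b) => [->|ib]; first by rewrite ?(negbTE bS) ?(negbTE hba) ?eqxx /=; case: (b \in S).
      by rewrite ?(negbTE ia) ?(negbTE ib) /=; case: (i \in S).
    lra.
have := @quad_key P l z1 z2 (x a) (x b) _ _ _ _ hP hl hs.
simpl. lra.
Qed.
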